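(* Let $\ell\ge7$ and let $F$ be an apexed $\ell$-frame. Then every two holes of $F$ are equivalent.
   Context: A hole is an induced cycle of length at least four. Two holes $C,C'$ are close if $|V(C)\cap V(C')|\ge4$, and equivalent if there is a sequence of holes $C=C_1,\dots,C_n=C'$ with $C_i,C_{i+1}$ close for $1\le i<n$. A threshold graph is a graph with no induced four-vertex path, four-vertex cycle, or complement of a four-vertex cycle. $\ell$-frame for odd $\ell$: let $k\ge3$ and $a_1,\dots,a_k,b_1,\dots,b_k$ be distinct; for $1\le i\le k$, $P_i$ is a path of length $(\ell-3)/2$ with ends $a_i,b_i$, pairwise vertex-disjoint. $A,B$ are threshold graphs on $\{a_1,\dots,a_k\}$ and $\{b_1,\dots,b_k\}$ with $b_ib_j$ an edge iff $a_ia_j$ is not, each of $A,B$ either disconnected or two-connected. The $\ell$-frame is $A\cup B\cup P_1\cup\dots\cup P_k$ (no other edges). Exactly one of $A,B$ is disconnected; the apexed $\ell$-frame adds a new vertex adjacent exactly to all vertices of the disconnected one. $\ell$-frame for even $\ell$: let $m\ge0$, $n\ge2$, $m+n\ge3$, and $a_1,\dots,a_n,c_1,\dots,c_m,b_1,\dots,b_n,d_1,\dots,d_m$ distinct. $P_i$ ($1\le i\le n$) is a path of length $\ell/2-2$ between $a_i,b_i$; $Q_i$ ($1\le i\le m$) a path of length $\ell/2-1$ between $c_i,d_i$; all pairwise disjoint. $A$ on $\{a_i\}\cup\{c_j\}$ and $B$ on $\{b_i\}\cup\{d_j\}$: $\{c_j\},\{d_j\}$ cliques; $\{a_i\},\{b_i\}$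 stable; the bipartite graph of $A$ between $\{a_i\}$ and $\{c_j\}$ has no induced two-edge matching; $b_id_j$ is an edge iff $a_ic_j$ is not; some $a_i$ has degree zero in $A$ and some $b_i$ degree zero in $B$; no other edges. The $\ell$-frame is $A\cup B\cup\bigcup P_i\cup\bigcup Q_j$; the apexed $\ell$-frame adds a new vertex adjacent exactly to $V(A)$ and a new vertex adjacent exactly to $V(B)$. *)

(* Defs.v *)
From Stdlib Require Import Relations.
From mathcomp Require Import all_boot.
Set Implicit Arguments. Unset Strict Implicit. Unset Printing Implicit Defensive.

Definition is_hole (V : finType) (e : rel V) (C : {set V}) : Prop :=
  exists (k : nat) (c : 'I_k -> V),
    [/\ 4 <= k, injective c, C = [set c i | i : 'I_k] &
        forall i j : 'I_k,
          e (c i) (c j) = (j == (i.+1 %% k) :> nat) || (i == (j.+1 %% k) :> nat)].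

Definition holes_close (V : finType) (C D : {set V}) : Prop := 4 <= #|C :&: D|.

Definition holes_equivalent (V : finType) (e : rel V) (C D : {set V}) : Prop :=
  clos_refl_trans_1n {set V}
    (fun X Y => [/\ is_hole e X, is_hole e Y & holes_close X Y]) C D.

Definition connected_on (T : finType) (A : rel T) (S : {set T}) : bool :=
  [forall x in S, forall y in S,
    connect [rel u v | [&& A u v, u \in S & v \in S]] x y].

Definition gconnected (T : finType) (A : rel T) : bool := connected_on A setT.

Definition two_connected (T : finType) (A : rel T) : Prop :=
  [/\ 3 <= #|T|, gconnected A & forall v : T, connected_on A (~: [set v])].

Definition simple_graph (T : finType) (A : rel T) : Prop :=
  irreflexive A /\ symmetric A.

(* threshold: no induced P4, C4, or complement of C4 (= 2K2) *)
Definition threshold (T : finType) (A : rel T) : Prop :=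
  forall w x y z : T, uniq [:: w; x; y; z] ->
    [/\ ~ [/\ A w x, A x y, A y z & [&& ~~ A w y, ~~ A w z & ~~ A x z]],
        ~ [/\ A w x, A x y, A y z & [&& A z w, ~~ A w y & ~~ A x z]] &
        ~ [/\ A w x, A y z & [&& ~~ A w y, ~~ A w z, ~~ A x y & ~~ A x z]]].

Definition consec (s t : nat) : bool := (s.+1 == t) || (t.+1 == s).

(* Vertices: Some (i, s) is the s-th vertex of the path P_i (s = 0 is a_i,
   s = L := (l-3)/2 is b_i); None is the apex. *)
Definition odd_frame_rel0 (k L : nat) (A : rel 'I_k) (apexA : bool)
    (x y : option ('I_k * 'I_L.+1)) : bool :=
  match x, y with
  | Some (i, s), Some (j, t) =>
      ((i == j) && consec s t)
      || ((i != j) && (((s == 0 :> nat) && (t == 0 :> nat) && A i j)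
                       || ((s == L :> nat) && (t == L :> nat) && ~~ A i j)))
  | None, Some (_, t) => if apexA then t == 0 :> nat else t == L :> nat
  | _, _ => false
  end.

Definition odd_frame_rel k L A apexA : rel (option ('I_k * 'I_L.+1)) :=
  fun x y => @odd_frame_rel0 k L A apexA x y || @odd_frame_rel0 k L A apexA y x.

(* B: b_i b_j is an edge iff a_i a_j is not (i != j) *)
Definition compl_rel (T : finType) (A : rel T) : rel T :=
  fun i j => (i != j) && ~~ A i j.

Definition apexed_odd_frame (l : nat) (V : finType) (e : rel V) : Prop :=
  exists (k : nat) (A : rel 'I_k)
         (f : option ('I_k * 'I_((l - 3)./2).+1) -> V),
    3 <= k /\ simple_graph A /\ threshold A /\ threshold (compl_rel A) /\
        (~~ gconnected A \/ two_connected A) /\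
        (~~ gconnected (compl_rel A) \/ two_connected (compl_rel A)) /\
        bijective f /\
        forall x y, e (f x) (f y) =
          @odd_frame_rel k ((l - 3)./2) A (~~ gconnected A) x y.

(* Vertices: inl (inl (i, s)) = s-th vertex of P_i (s = 0: a_i, s = L1: b_i),
   inl (inr (j, t)) = t-th vertex of Q_j (t = 0: c_j, t = L2: d_j),
   inr true = apex adjacent to V(A), inr false = apex adjacent to V(B).
   R i j : a_i c_j is an edge of A. *)
Definition even_frame_rel0 (n m L1 L2 : nat) (R : 'I_n -> 'I_m -> bool)
    (x y : ('I_n * 'I_L1.+1) + ('I_m * 'I_L2.+1) + bool) : bool :=
  match x, y with
  | inl (inl (i, s)), inl (inl (j, t)) => (i == j) && consec s t
  | inl (inr (i, s)), inl (inr (j, t)) =>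
      ((i == j) && consec s t)
      || ((i != j) && (((s == 0 :> nat) && (t == 0 :> nat))
                       || ((s == L2 :> nat) && (t == L2 :> nat))))
  | inl (inl (i, s)), inl (inr (j, t)) =>
      ((s == 0 :> nat) && (t == 0 :> nat) && R i j)
      || ((s == L1 :> nat) && (t == L2 :> nat) && ~~ R i j)
  | inr true, inl (inl (_, s)) => s == 0 :> nat
  | inr false, inl (inl (_, s)) => s == L1 :> nat
  | inr true, inl (inr (_, t)) => t == 0 :> nat
  | inr false, inl (inr (_, t)) => t == L2 :> nat
  | _, _ => false
  end.

Definition even_frame_rel n m L1 L2 R :
    rel (('I_n * 'I_L1.+1) + ('I_m * 'I_L2.+1) + bool) :=
  fun x y => @even_frame_rel0 n m L1 L2 R x y || @even_frame_rel0 n m L1 L2 R y x.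

Definition apexed_even_frame (l : nat) (V : finType) (e : rel V) : Prop :=
  exists (n m : nat) (R : 'I_n -> 'I_m -> bool)
    (f : ('I_n * 'I_(l./2 - 2).+1) + ('I_m * 'I_(l./2 - 1).+1) + bool -> V),
    2 <= n /\ 3 <= m + n /\
        (* no induced two-edge matching in the bipartite graph of A *)
        (forall (i i' : 'I_n) (j j' : 'I_m), i != i' -> j != j' ->
            ~ [/\ R i j, R i' j', ~~ R i j' & ~~ R i' j]) /\
        (exists i : 'I_n, forall j, ~~ R i j) /\
        (exists i : 'I_n, forall j, R i j) /\
        bijective f /\
        forall x y, e (f x) (f y) =
          @even_frame_rel n m (l./2 - 2) (l./2 - 1) R x y.

Definition apexed_frame (l : nat) (V : finType) (e : rel V) : Prop :=
  if odd l then apexed_odd_frame l e else apexed_even_frame l e.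

(* Main.v *)
From Stdlib Require Import Relations.
From Stdlib Require Import FunctionalExtensionality.
Require Import Defs.
From mathcomp Require Import all_boot.
From mathcomp Require Import zify.
Set Implicit Arguments. Unset Strict Implicit. Unset Printing Implicit Defensive.


Lemma modS (a k : nat) : a < k -> a.+1 %% k = if a.+1 == k then 0 else a.+1.
Proof.
move=> ak; case: ifP => [/eqP ->|h]; first by rewrite modnn.
rewrite modn_small //; lia.
Qed.

Ltac ifs := repeat match goal with
 | |- context [if ?b then _ else _] =>
     lazymatch b with context [if _ then _ else _] => fail | _ => case: (boolP b) => ? end
 end.
Ltac ifl := ifs; lia.

Section Generic.
Variables (V : finType) (e : rel V).

Lemma hole_local C : is_hole e C -> forall x, x \in C ->
  exists u w, [/\ u \in C, w \in C, u != w, e x u & e x w] /\ ~~ e u w /\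
     (forall y, y \in C -> e x y -> y = u \/ y = w).
Proof.
case=> k [c [k4 injc -> ec]] x /imsetP [t _ ->].
have tk := ltn_ord t.
have nlt : (if t.+1 == k then 0 else t.+1) < k by case: ifP => ?; lia.
have plt : (if nat_of_ord t == 0 then k.-1 else (nat_of_ord t).-1) < k by case: ifP => ?; lia.
pose nx := Ordinal nlt; pose pv := Ordinal plt.
have nxk := ltn_ord nx; have pvk := ltn_ord pv.
exists (c nx), (c pv); split; [split|split].
- exact: imset_f.
- exact: imset_f.
- rewrite (inj_eq injc); apply/eqP => /(congr1 val) /=.
  ifl.
- by rewrite ec (modS tk) eqxx.
- rewrite ec (modS pvk) /=; apply/orP; right.
  ifl.
- rewrite ec (modS nxk) (modS pvk) /=.
  ifl.
- move=> y /imsetP [j _ ->]; have jk := ltn_ord j.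
  rewrite ec (modS tk) (modS jk) => /orP [h|h]; [left|right]; congr c; apply: val_inj => /=.
  + move: h; ifl.
  + move: h; ifl.
Qed.
End Generic.

Section Generic2.
Variables (V : finType) (e : rel V).

Lemma hole_prop C x p q : is_hole e C -> x \in C ->
  (forall y, e x y -> y = p \/ y = q) -> p \in C /\ q \in C.
Proof.
move=> hC xC hn; have [u [w [[uC wC uw xu xw] _]]] := hole_local hC xC.
have := hn _ xu; have := hn _ xw.
by case=> ?; case=> ?; subst; first [by rewrite eqxx in uw | by split].
Qed.

Lemma equiv_trans C D E : holes_equivalent e C D -> holes_equivalent e D E ->
  holes_equivalent e C E.
Proof.
elim=> [//|X Y Z hXY _ IH] /IH h; exact: Relation_Operators.rt1n_trans hXY h.
Qed.

Lemma equiv_sym C D : holes_equivalent e C D -> holes_equivalent e D C.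
Proof.
elim=> [|X Y Z [hX hY hc] _ IH]; first exact: rt1n_refl.
apply: (equiv_trans IH); apply: Relation_Operators.rt1n_trans (rt1n_refl _ _ _).
by split => //; rewrite /holes_close setIC.
Qed.

Lemma close_equiv C D : is_hole e C -> is_hole e D -> holes_close C D ->
  holes_equivalent e C D.
Proof. move=> *; apply: Relation_Operators.rt1n_trans (rt1n_refl _ _ _); by split. Qed.

Lemma close4 (C D : {set V}) (a b c d : V) : uniq [:: a; b; c; d] ->
  a \in C -> b \in C -> c \in C -> d \in C ->
  a \in D -> b \in D -> c \in D -> d \in D -> holes_close C D.
Proof.
move=> u *; rewrite /holes_close.
have <- : size [:: a; b; c; d] = 4 by [].
rewrite -(card_uniqP u); apply: subset_leq_card; apply/subsetP => x.
by rewrite !inE => /or4P [] /eqP ->; apply/andP.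
Qed.

Lemma hole_other (esym : symmetric e) (C : {set V}) x v : is_hole e C -> x \in C -> v \in C -> e x v ->
  exists y, [/\ y \in C, y != v, e x y, ~~ e v y & forall z, z \in C -> e x z -> z = v \/ z = y].
Proof.
move=> hC xC vC xv; have [u [w [[uC wC uw xu xw] [nuw hall]]]] := hole_local hC xC.
case: (hall _ vC xv) => ?; subst v.
- exists w; split => //; by rewrite eq_sym.
- exists u; split => //; first by rewrite esym.
  by move=> z zC xz; case: (hall _ zC xz); [right|left].
Qed.

Lemma no_hole_side (esym : symmetric e) (C : {set V}) (n : nat) (Z : rel 'I_n) (phi : 'I_n -> V) :
  is_hole e C -> threshold Z -> injective phi -> (forall p, ~~ e (phi p) (phi p)) ->
  (forall p q, p != q -> e (phi p) (phi q) = Z p q) ->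
  (forall p y, phi p \in C -> y \in C -> e (phi p) y -> exists q, y = phi q) ->
  forall i, phi i \notin C.
Proof.
move=> hC thZ injp irr eZ cl i; apply/negP => iC.
have [u [w [[uC wC uw xu xw] [nuw _]]]] := hole_local hC iC.
case: (cl _ _ iC uC xu) => p ?; subst u.
case: (cl _ _ iC wC xw) => q ?; subst w.
have ip : i != p by apply/eqP => E; subst p; move: (irr i); rewrite xu.
have iq : i != q by apply/eqP => E; subst q; move: (irr i); rewrite xw.
have pq : p != q by apply/eqP => E; subst q; rewrite eqxx in uw.
have Zs : forall a b, a != b -> Z a b = Z b a.
  by move=> a b ab; rewrite -!eZ // 1?eq_sym // esym.
have Zip : Z i p by rewrite -eZ.
have Ziq : Z i q by rewrite -eZ.
have nZpq : ~~ Z p q by rewrite -eZ.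
have ui : e (phi p) (phi i) by rewrite esym.
have [y [yC yi py niy _]] := hole_other esym hC uC iC ui.
case: (cl _ _ uC yC py) => p' ?; subst y.
have pp' : p != p' by apply/eqP => E; subst p'; move: (irr p); rewrite py.
have ip' : i != p' by apply/eqP => E; subst p'; rewrite eqxx in yi.
have qp' : q != p' by apply/eqP => E; subst p'; move: nuw; rewrite py.
have Zpp' : Z p p' by rewrite -eZ.
have nZip' : ~~ Z i p' by rewrite -eZ.
have qi : q != i by rewrite eq_sym.
have qp : q != p by rewrite eq_sym.
have p'q : p' != q by rewrite eq_sym.
case: (boolP (Z q p')) => Zqp'.
- have := thZ i p p' q; rewrite /= !inE !negb_or ip ip' iq pp' pq p'q => /(_ isT) [_ c4 _].
  apply: c4; split => //; first by rewrite Zs // eq_sym.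
  by rewrite (Zs q i) // Ziq nZip' nZpq.
- have := thZ q i p p'; rewrite /= !inE !negb_or qi qp qp' ip ip' pp' => /(_ isT) [p4 _ _].
  apply: p4; split => //; first by rewrite Zs.
  by rewrite (Zs q p) // nZpq Zqp' nZip'.
Qed.
End Generic2.

Lemma transfer (W V : finType) (r : rel W) (e : rel V) (f : W -> V) :
  bijective f -> (forall x y, e (f x) (f y) = r x y) ->
  (forall C D, is_hole r C -> is_hole r D -> holes_equivalent r C D) ->
  forall C D, is_hole e C -> is_hole e D -> holes_equivalent e C D.
Proof.
case=> g gf fg ef H.
have back : forall C, is_hole e C -> is_hole r (g @: C).
  move=> C [k [c [k4 ic -> ec]]]; exists k, (g \o c); split => //.
  - by apply: inj_comp => //; apply: can_inj fg.
  - by rewrite -imset_comp.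
  - by move=> i j; rewrite -ec /= -ef !fg.
have fwd : forall C, is_hole r C -> is_hole e (f @: C).
  move=> C [k [c [k4 ic -> ec]]]; exists k, (f \o c); split => //.
  - by apply: inj_comp => //; apply: can_inj gf.
  - by rewrite -imset_comp.
  - by move=> i j; rewrite -ec /= ef.
have finj : injective f by apply: can_inj gf.
have mapeq : forall X Y, holes_equivalent r X Y -> holes_equivalent e (f @: X) (f @: Y).
  move=> X Y; elim=> [Z|X1 Y1 Z1 [h1 h2 hc] _ IH]; first exact: rt1n_refl.
  apply: Relation_Operators.rt1n_trans IH; split; [exact: fwd|exact: fwd|].
  rewrite /holes_close -imsetI; last by move=> ? ? _ _; apply: finj.
  by rewrite card_imset.
have idC : forall C : {set V}, f @: (g @: C) = C.
  move=> C; rewrite -imset_comp; rewrite (eq_imset (g := id)) ?imset_id //.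
move=> C D hC hD; rewrite -(idC C) -(idC D); apply: mapeq; apply: H; exact: back.
Qed.

Section Generic3.
Variables (V : finType) (e : rel V).
Hypothesis esym : symmetric e.

Lemma apex_notin (C : {set V}) z : is_hole e C ->
  (forall u y, u \in C -> y \in C -> e z u -> e u y -> y != z -> e z y) -> z \notin C.
Proof.
move=> hC H; apply/negP => zC.
have [u [w [[uC wC uw zu zw] _]]] := hole_local hC zC.
have uz : e u z by rewrite esym.
have [y [yC yz uy nzy _]] := hole_other esym hC uC zC uz.
by move: nzy; rewrite (H u y).
Qed.

Lemma nbrs_adj (C : {set V}) x : is_hole e C -> x \in C ->
  (forall u w, u \in C -> w \in C -> e x u -> e x w -> u != w -> e u w) -> False.
Proof.
move=> hC xC H; have [u [w [[uC wC uw xu xw] [nuw _]]]] := hole_local hC xC.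
by move: nuw; rewrite H.
Qed.
End Generic3.

Lemma gen_all_in (V : finType) (e : rel V) (C : {set V}) (f : nat -> V) (L s : nat) :
  is_hole e C ->
  (forall t y, 0 < t < L -> e (f t) y -> y = f t.-1 \/ y = f t.+1) ->
  0 < s < L -> f s \in C -> forall t, t <= L -> f t \in C.
Proof.
move=> hC hn hs sC.
have step : forall t, 0 < t < L -> f t \in C -> f t.-1 \in C /\ f t.+1 \in C.
  by move=> t ht tC; apply: (hole_prop hC tC) => y; apply: hn.
have up : forall d, s + d <= L -> f (s + d) \in C.
  elim=> [|d IH] h; first by rewrite addn0.
  have [_ ] := step (s + d) ltac:(lia) (IH ltac:(lia)).
  by rewrite addnS.
have down : forall d, d <= s -> f (s - d) \in C.
  elim=> [|d IH] h; first by rewrite subn0.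
  have [+ _] := step (s - d) ltac:(lia) (IH ltac:(lia)).
  by have -> : (s - d).-1 = s - d.+1 by lia.
move=> t tL; case: (leqP s t) => h.
- by have := up (t - s) ltac:(lia); have -> : s + (t - s) = t by lia.
- by have := down (s - t) ltac:(lia); have -> : s - (s - t) = t by lia.
Qed.



Section Odd.
Variables (k L : nat) (X : rel 'I_k).
Hypothesis L2 : 2 <= L.
Hypothesis Xsym : symmetric X.
Hypothesis thX : threshold X.
Hypothesis thY : threshold (compl_rel X).
Hypothesis cY : gconnected (compl_rel X).

Local Notation T := (option ('I_k * 'I_L.+1)).
Local Notation r := (@odd_frame_rel k L X true).
Definition opv (i : 'I_k) (t : nat) : T := Some (i, inord t).
Local Notation pv := opv.

Lemma or_sym : symmetric r. Proof. by move=> x y; rewrite /odd_frame_rel orbC. Qed.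

Lemma or_SS i j (s t : 'I_L.+1) : r (Some (i,s)) (Some (j,t)) =
  ((i == j) && consec s t) || ((i != j) && ((s == 0 :> nat) && (t == 0 :> nat) && X i j
     || (s == L :> nat) && (t == L :> nat) && ~~ X i j)).
Proof.
rewrite /odd_frame_rel /= (eq_sym j i) (Xsym j i) /consec.
by case: (i == j); case: (X i j) => /=; lia.
Qed.

Lemma or_NS i (t : 'I_L.+1) : r None (Some (i,t)) = (t == 0 :> nat).
Proof. by rewrite /odd_frame_rel /= orbF. Qed.

Lemma or_SN i (t : 'I_L.+1) : r (Some (i,t)) None = (t == 0 :> nat).
Proof. by rewrite or_sym or_NS. Qed.

Lemma or_pp p q s t : s <= L -> t <= L -> r (pv p s) (pv q t) =
  ((p == q) && consec s t) || ((p != q) && ((s == 0) && (t == 0) && X p q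
     || (s == L) && (t == L) && ~~ X p q)).
Proof. by move=> hs ht; rewrite /opv or_SS !inordK. Qed.

Lemma or_Np p t : t <= L -> r None (pv p t) = (t == 0).
Proof. by move=> ht; rewrite /opv or_NS inordK. Qed.

Lemma or_pN p t : t <= L -> r (pv p t) None = (t == 0).
Proof. by move=> ht; rewrite /opv or_SN inordK. Qed.

Lemma or_NN : r None None = false. Proof. by []. Qed.

Lemma or_irr x : r x x = false.
Proof. case: x => [[i s]|] //; rewrite or_SS eqxx /consec /=; lia. Qed.

Lemma opv_S i (s : 'I_L.+1) : Some (i, s) = pv i s.
Proof. by rewrite /opv inord_val. Qed.

Lemma opv_eq p q s t : s <= L -> t <= L -> (pv p s == pv q t) = (p == q) && (s == t).
Proof.
move=> hs ht; apply/eqP/andP => [[-> /(congr1 val)]|[/eqP -> /eqP ->]] //=.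
by rewrite !inordK // => ->.
Qed.

Definition interior (x : T) : bool := if x is Some (_, s) then (0 < s < L) else false.

Lemma nbr_int i t y : 0 < t < L -> r (pv i t) y -> y = pv i t.-1 \/ y = pv i t.+1.
Proof.
move=> ht; case: y => [[j s]|]; last by rewrite or_pN; lia.
have sL := ltn_ord s.
rewrite opv_S or_pp; [|lia|lia].
case: (i =P j) => [<-|ij]; rewrite ?eqxx /=.
- rewrite /consec => h; have [h1|h1] : t.+1 = s \/ s.+1 = t by lia.
  + by right; congr pv; lia.
  + by left; congr pv; lia.
- move=> h; exfalso; move: h; case: (X i j) => /=; lia.
Qed.

Lemma nbr_b i y : r (pv i L) y -> y = pv i L.-1 \/ exists j, [/\ i != j, ~~ X i j & y = pv j L].
Proof.
case: y => [[j s]|]; last by rewrite or_pN; lia.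
have sL := ltn_ord s.
rewrite opv_S or_pp; [|lia|lia].
case: (i =P j) => [<-|/eqP ij]; rewrite ?eqxx /=.
- by rewrite /consec => h; left; congr pv; lia.
- move=> h; right; exists j; split => //.
  + by move: h; case: (X i j) => /=; lia.
  + by congr pv; move: h; case: (X i j) => /=; lia.
Qed.

Lemma none_notin C : is_hole r C -> (forall x, x \in C -> ~~ interior x) -> None \notin C.
Proof.
move=> hC hint; apply/negP => nC.
have [u [w [[uC wC uw nu nw] [nuw _]]]] := hole_local hC nC.
case: u uC uw nu nuw => [[i s]|] uC uw nu nuw; last by rewrite or_irr in nu.
rewrite or_NS in nu.
have un : r (Some (i, s)) None by rewrite or_sym or_NS.
have [y [yC yn uy nny _]] := hole_other or_sym hC uC nC un.
case: y yC yn uy nny => [[j t]|] yC yn uy nny; last by rewrite eqxx in yn.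
have := hint _ yC; rewrite /= or_NS in nny *.
move: uy; rewrite or_SS /consec; case: (i == j); case: (X i j) => /=; lia.
Qed.

Lemma exists_int C : is_hole r C -> exists i (s : 'I_L.+1), 0 < s < L /\ Some (i,s) \in C.
Proof.
move=> hC.
case: (boolP [exists x in C, interior x]) => [/exists_inP [[[i s]|] xC hx]|/exists_inP nex].
- by exists i, s.
- by [].
have hint : forall x, x \in C -> ~~ interior x.
  by move=> x xC; apply/negP => hx; apply: nex; exists x.
have nN := none_notin hC hint.
have [x xC] : exists x, x \in C.
  case: hC => kk [c [k4 _ eC _]]; have k0 : 0 < kk by lia.
  by exists (c (Ordinal k0)); rewrite eC; apply: imset_f.
case: x xC => [[i s]|] xC; last by rewrite xC in nN.
exfalso.
have hs := hint _ xC; rewrite /= in hs.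
have sL := ltn_ord s.
have cl : forall (s0 : 'I_L.+1), (s0 == 0 :> nat) || (s0 == L :> nat) ->
   forall p y, Some (p, s0) \in C -> y \in C -> r (Some (p, s0)) y -> exists q, y = Some (q, s0).
  move=> s0 hs0 p [[q t]|] pC yC; last by rewrite yC in nN.
  have := hint _ yC; rewrite /= or_SS /consec => ht.
  have s0L := ltn_ord s0; have tL := ltn_ord t.
  case: (p == q); case: (X p q) => /= h; try (exfalso; lia);
   exists q; congr (Some (_, _)); apply: val_inj => /=; lia.
have irr : forall (s0 : 'I_L.+1) p, ~~ r (Some (p, s0)) (Some (p, s0)) by move=> *; rewrite or_irr.
have sinj : forall (s0 : 'I_L.+1), injective (fun p => Some (p, s0) : T) by move=> s0 p q [].
have hs2 : (s == 0 :> nat) || (s == L :> nat) by lia.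
case/orP: (hs2) => hs0.
- have eZ : forall p q, p != q -> r (Some (p,s)) (Some (q,s)) = X p q.
    move=> p q pq; rewrite or_SS (negbTE pq) /=; move/eqP: hs0 => ->; lia.
  have := no_hole_side or_sym hC thX (sinj s) (irr s) eZ (cl s hs2) i.
  by rewrite xC.
- have eZ : forall p q, p != q -> r (Some (p,s)) (Some (q,s)) = compl_rel X p q.
    move=> p q pq; rewrite or_SS (negbTE pq) /= /compl_rel pq /=; move/eqP: hs0 => ->; lia.
  have := no_hole_side or_sym hC thY (sinj s) (irr s) eZ (cl s hs2) i.
  by rewrite xC.
Qed.

Lemma all_in C i (s : 'I_L.+1) : is_hole r C -> 0 < s < L -> Some (i, s) \in C ->
  forall t, t <= L -> pv i t \in C.
Proof.
move=> hC hs; rewrite opv_S => sC.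
have step : forall t, 0 < t < L -> pv i t \in C -> pv i t.-1 \in C /\ pv i t.+1 \in C.
  by move=> t ht tC; apply: (hole_prop hC tC) => y; apply: nbr_int.
have up : forall d, s + d <= L -> pv i (s + d) \in C.
  elim=> [|d IH] h; first by rewrite addn0.
  have [_ ] := step (s + d) ltac:(lia) (IH ltac:(lia)).
  by rewrite addnS.
have down : forall d, d <= s -> pv i (s - d) \in C.
  elim=> [|d IH] h; first by rewrite subn0.
  have [+ _] := step (s - d) ltac:(lia) (IH ltac:(lia)).
  by have -> : (s - d).-1 = s - d.+1 by lia.
move=> t tL; case: (leqP s t) => h.
- by have := up (t - s) ltac:(lia); have -> : s + (t - s) = t by lia.
- by have := down (s - t) ltac:(lia); have -> : s - (s - t) = t by lia.
Qed.

Definition cf (i j : 'I_k) (a : nat) : T :=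
  if a <= L then pv i a else if a <= L.*2.+1 then pv j (L.*2.+1 - a) else None.

Definition Hh i j : {set T} := [set cf i j a | a : 'I_(L.*2 + 3)].



Lemma Hh_hole i j : i != j -> ~~ X i j -> is_hole r (Hh i j).
Proof.
move=> ij nX; exists (L.*2 + 3), (fun a => cf i j a); split => //; first lia.
- pose pos (x : T) : nat := match x with Some (p, t) => if p == i then val t else L.*2.+1 - t
                                          | None => L.*2.+2 end.
  have posK : forall a : 'I_(L.*2 + 3), pos (cf i j a) = a.
    move=> a; have aK := ltn_ord a; rewrite /cf /opv; ifs => /=; rewrite ?eqxx.
    + by rewrite inordK //; lia.
    + by rewrite eq_sym (negbTE ij) inordK; lia.
    + lia.
  by move=> a b /(congr1 pos); rewrite !posK => /val_inj.
- have jiF : (j == i) = false by rewrite eq_sym (negbTE ij).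
  have XjiF : X j i = false by rewrite Xsym (negbTE nX).
  move=> a b; have aK := ltn_ord a; have bK := ltn_ord b.
  rewrite (modS aK) (modS bK) /cf; ifs;
    rewrite ?or_pp ?or_Np ?or_pN ?or_NN ?eqxx ?(negbTE ij) ?jiF ?(negbTE nX) ?XjiF /consec /=; lia.
Qed.

Lemma memHi i j t : t <= L -> pv i t \in Hh i j.
Proof.
move=> tL; have tK : t < L.*2 + 3 by lia.
by apply/imsetP; exists (Ordinal tK) => //; rewrite /cf /= tL.
Qed.

Lemma memHj i j t : t <= L -> pv j t \in Hh i j.
Proof.
move=> tL; have tK : L.*2.+1 - t < L.*2 + 3 by lia.
apply/imsetP; exists (Ordinal tK) => //; rewrite /cf /=.
have -> : (L.*2.+1 - t <= L) = false by lia.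
have -> : (L.*2.+1 - t <= L.*2.+1) = true by lia.
congr pv; lia.
Qed.

Lemma memHN i j : None \in Hh i j.
Proof.
have tK : L.*2.+2 < L.*2 + 3 by lia.
apply/imsetP; exists (Ordinal tK) => //; rewrite /cf /=.
have -> : (L.*2.+2 <= L) = false by lia.
by have -> : (L.*2.+2 <= L.*2.+1) = false by lia.
Qed.

Lemma hole_near C : is_hole r C -> exists i j, compl_rel X i j /\ holes_close C (Hh i j).
Proof.
move=> hC; have [i [s [hs sC]]] := exists_int hC.
have allC := all_in hC hs sC.
have bC := allC L (leqnn _).
have b1C := allC L.-1 ltac:(lia).
have rb : r (pv i L) (pv i L.-1) by rewrite or_pp ?eqxx /consec /=; lia.
have [y [yC yn ry _ _]] := hole_other or_sym hC bC b1C rb.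
case: (nbr_b ry) => [E|[j [ij nX E]]]; first by rewrite E eqxx in yn.
subst y; exists i, j; split; first by rewrite /compl_rel ij.
apply: (close4 (a := pv i 0) (b := pv i 1) (c := pv i 2) (d := pv j L)).
- rewrite /= !inE !opv_eq ?eqxx ?(negbTE ij) /=; lia.
all: (apply: allC || apply: memHi || apply: memHj || idtac); try lia; done.
Qed.

Lemma Hh_equiv i0 j0 : compl_rel X i0 j0 -> forall u v, compl_rel X u v ->
  holes_equivalent r (Hh i0 j0) (Hh u v).
Proof.
have hH : forall u v, compl_rel X u v -> is_hole r (Hh u v).
  by move=> u v /andP [uv nX]; apply: Hh_hole.
have unq : forall u, uniq [:: pv u 0; pv u 1; pv u 2; None].
  by move=> u; rewrite /= !inE !opv_eq ?eqxx /=; lia.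
move=> h0.
pose S u := forall v, compl_rel X u v -> holes_equivalent r (Hh i0 j0) (Hh u v).
have S0 : S i0.
  move=> v hv; apply: close_equiv; [exact: hH|exact: hH|].
  apply: (close4 (unq i0)); (apply: memHi || apply: memHN); lia.
have Sstep : forall u w, S u -> compl_rel X u w -> S w.
  move=> u w hu huw v hwv; apply: equiv_trans (hu w huw) _.
  apply: close_equiv; [exact: hH|exact: hH|].
  apply: (close4 (unq w)); (apply: memHi || apply: memHj || apply: memHN); lia.
have Spath : forall x p, S x ->
    path [rel u v | [&& compl_rel X u v, u \in setT & v \in setT]] x p -> S (last x p).
  move=> x p; elim: p x => [|y p IH] x //= Sx /andP [/andP [hxy _] hp].
  exact: IH (Sstep _ _ Sx hxy) hp.
move=> u v huv.
move/forall_inP: cY => /(_ i0 (in_setT _)) /forall_inP /(_ u (in_setT _)) /connectP [p pth E].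
by have := Spath _ _ S0 pth; rewrite -E; apply.
Qed.

Theorem odd_core C D : is_hole r C -> is_hole r D -> holes_equivalent r C D.
Proof.
move=> hC hD.
have [i [j [hij cC]]] := hole_near hC.
have [i' [j' [hij' cD]]] := hole_near hD.
have hH : forall u v, compl_rel X u v -> is_hole r (Hh u v).
  by move=> u v /andP [uv nX]; apply: Hh_hole.
apply: equiv_trans (close_equiv hC (hH _ _ hij) cC) _.
apply: equiv_trans (Hh_equiv hij hij') _.
apply: equiv_sym; apply: close_equiv => //; exact: hH.
Qed.
End Odd.






Section Even.
Variables (n m L1 L2 : nat) (R : 'I_n -> 'I_m -> bool).
Hypothesis L1_2 : 2 <= L1.
Hypothesis L2E : L2 = L1.+1.
Hypothesis n2 : 1 < n.

Local Notation TE := (('I_n * 'I_L1.+1) + ('I_m * 'I_L2.+1) + bool)%type.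
Local Notation re := (@even_frame_rel n m L1 L2 R).
Definition Pv (i : 'I_n) (t : nat) : TE := inl (inl (i, inord t)).
Definition Qv (j : 'I_m) (t : nat) : TE := inl (inr (j, inord t)).
Local Notation zA := (inr true : TE).
Local Notation zB := (inr false : TE).

Lemma re_sym : symmetric re. Proof. by move=> x y; rewrite /even_frame_rel orbC. Qed.

Lemma re_PP i i' s t : s <= L1 -> t <= L1 -> re (Pv i s) (Pv i' t) = (i == i') && consec s t.
Proof. by move=> hs ht; rewrite /even_frame_rel /= !inordK // (eq_sym i') /consec; lia. Qed.

Lemma re_QQ j j' s t : s <= L2 -> t <= L2 -> re (Qv j s) (Qv j' t) =
  ((j == j') && consec s t) || ((j != j') && ((s == 0) && (t == 0) || (s == L2) && (t == L2))).
Proof. by move=> hs ht; rewrite /even_frame_rel /= !inordK // (eq_sym j') /consec; lia. Qed.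

Lemma re_PQ i j s t : s <= L1 -> t <= L2 -> re (Pv i s) (Qv j t) =
  (s == 0) && (t == 0) && R i j || (s == L1) && (t == L2) && ~~ R i j.
Proof. by move=> hs ht; rewrite /even_frame_rel /= !inordK // orbF. Qed.

Lemma re_QP i j s t : s <= L1 -> t <= L2 -> re (Qv j t) (Pv i s) =
  (s == 0) && (t == 0) && R i j || (s == L1) && (t == L2) && ~~ R i j.
Proof. by move=> hs ht; rewrite re_sym re_PQ. Qed.

Lemma re_AP i s : s <= L1 -> re zA (Pv i s) = (s == 0).
Proof. by move=> hs; rewrite /even_frame_rel /= !inordK // orbF. Qed.
Lemma re_PA i s : s <= L1 -> re (Pv i s) zA = (s == 0).
Proof. by move=> hs; rewrite re_sym re_AP. Qed.
Lemma re_BP i s : s <= L1 -> re zB (Pv i s) = (s == L1).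
Proof. by move=> hs; rewrite /even_frame_rel /= !inordK // orbF. Qed.
Lemma re_PB i s : s <= L1 -> re (Pv i s) zB = (s == L1).
Proof. by move=> hs; rewrite re_sym re_BP. Qed.
Lemma re_AQ j s : s <= L2 -> re zA (Qv j s) = (s == 0).
Proof. by move=> hs; rewrite /even_frame_rel /= !inordK // orbF. Qed.
Lemma re_QA j s : s <= L2 -> re (Qv j s) zA = (s == 0).
Proof. by move=> hs; rewrite re_sym re_AQ. Qed.
Lemma re_BQ j s : s <= L2 -> re zB (Qv j s) = (s == L2).
Proof. by move=> hs; rewrite /even_frame_rel /= !inordK // orbF. Qed.
Lemma re_QB j s : s <= L2 -> re (Qv j s) zB = (s == L2).
Proof. by move=> hs; rewrite re_sym re_BQ. Qed.
Lemma re_zz b c : re (inr b) (inr c) = false.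
Proof. by case: b; case: c. Qed.

Lemma Pv_S i (s : 'I_L1.+1) : inl (inl (i, s)) = Pv i s.
Proof. by rewrite /Pv inord_val. Qed.
Lemma Qv_S j (s : 'I_L2.+1) : inl (inr (j, s)) = Qv j s.
Proof. by rewrite /Qv inord_val. Qed.

Lemma Pv_eq i i' s t : s <= L1 -> t <= L1 -> (Pv i s == Pv i' t) = (i == i') && (s == t).
Proof.
move=> hs ht; apply/eqP/andP => [[-> /(congr1 val)]|[/eqP -> /eqP ->]] //=.
by rewrite !inordK // => ->.
Qed.
Lemma Qv_eq j j' s t : s <= L2 -> t <= L2 -> (Qv j s == Qv j' t) = (j == j') && (s == t).
Proof.
move=> hs ht; apply/eqP/andP => [[-> /(congr1 val)]|[/eqP -> /eqP ->]] //=.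
by rewrite !inordK // => ->.
Qed.
Lemma PQ_neq i j s t : (Pv i s == Qv j t) = false. Proof. by []. Qed.
Lemma PA_neq i s b : (Pv i s == inr b) = false. Proof. by []. Qed.
Lemma QA_neq j s b : (Qv j s == inr b) = false. Proof. by []. Qed.
Lemma zz_eq b c : ((inr b : TE) == inr c) = (b == c). Proof. by []. Qed.
Lemma QP_neq i j s t : (Qv j t == Pv i s) = false. Proof. by []. Qed.

Ltac side := match goal with
  | |- is_true (nat_of_ord ?s <= _) => first [exact: (ltn_ord s) | have := ltn_ord s; lia]
  | |- is_true (_ <= _) => lia end.
Ltac rre := rewrite ?Pv_S ?Qv_S ?re_PP ?re_QQ ?re_PQ ?re_QP ?re_AP ?re_PA ?re_BP ?re_PB
   ?re_AQ ?re_QA ?re_BQ ?re_QB ?re_zz; try side.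

Definition isP (x : TE) : bool := if x is inl (inl _) then true else false.

Definition interiorE (x : TE) : bool :=
  match x with
  | inl (inl (_, s)) => 0 < s < L1
  | inl (inr (_, t)) => 0 < t < L2
  | inr _ => false
  end.


Ltac addb := repeat match goal with |- context [nat_of_ord ?s] =>
  lazymatch goal with H : is_true (nat_of_ord s < _) |- _ => fail | _ => have := ltn_ord s; move=> ? end end.

Ltac splitb := repeat match goal with
  | |- context [R ?a ?b] => case: (R a b)
  | |- context [@eq_op ?T ?a ?b] => lazymatch type of a with
        | ordinal _ => case: (@eq_op T a b) | _ => fail end
  end.

Ltac brute := rewrite ?Pv_S ?Qv_S; rewrite ?re_PP ?re_QQ ?re_PQ ?re_QP ?re_AP ?re_PA ?re_BP ?re_PB
   ?re_AQ ?re_QA ?re_BQ ?re_QB ?re_zz ?Pv_eq ?Qv_eq ?PQ_neq ?QP_neq ?PA_neq ?QA_neq ?zz_eq ?eqxx /consec /=; try side; splitb; rewrite /=; try done; addb; try lia.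

Lemma exists_intE C : is_hole re C -> exists x, x \in C /\ interiorE x.
Proof.
move=> hC; case: (boolP [exists x in C, interiorE x]) => [/exists_inP [x xC hx]|/exists_inP nex].
  by exists x.
exfalso.
have hint : forall x, x \in C -> ~~ interiorE x.
  by move=> x xC; apply/negP => hx; apply: nex; exists x.
have nA : zA \notin C.
  apply: (apex_notin re_sym hC) => u y uC yC zu uy yz.
  have hy := hint y yC.
  case: u uC zu uy => [[[i s]|[j s]]|[]] uC zu uy;
  case: y yC yz uy hy => [[[i' s']|[j' s']]|[]] yC yz uy hy; rewrite /= in hy; move: zu uy yz hy; brute.
have nB : zB \notin C.
  apply: (apex_notin re_sym hC) => u y uC yC zu uy yz.
  have hy := hint y yC.
  case: u uC zu uy => [[[i s]|[j s]]|[]] uC zu uy;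
  case: y yC yz uy hy => [[[i' s']|[j' s']]|[]] yC yz uy hy; rewrite /= in hy; move: zu uy yz hy; brute.
have nz : forall u, u \in C -> (u != zA) && (u != zB).
  by move=> u uC; apply/andP; split; apply/eqP => E; subst u; [rewrite uC in nA|rewrite uC in nB].
have nP : forall i s, s <= L1 -> (s == 0) || (s == L1) -> Pv i s \notin C.
  move=> i s sL hs; apply/negP => xC; apply: (nbrs_adj hC xC) => u w uC wC xu xw uw.
  have hu := hint u uC; have hw := hint w wC; have zu := nz u uC; have zw := nz w wC.
  case: u uC xu uw hu zu => [[[i1 s1]|[j1 s1]]|[]] uC xu uw hu zu;
  case: w wC xw uw hw zw => [[[i2 s2]|[j2 s2]]|[]] wC xw uw hw zw; rewrite /= in hu hw; move: hs xu xw uw hu hw zu zw; brute.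
have nQ : forall j t, t <= L2 -> (t == 0) || (t == L2) -> Qv j t \notin C.
  move=> j t tL ht; apply/negP => xC; apply: (nbrs_adj hC xC) => u w uC wC xu xw uw.
  have hu := hint u uC; have hw := hint w wC; have zu := nz u uC; have zw := nz w wC.
  have uP : ~~ isP u.
    case: u uC hu {xu uw zu} => [[[i s]|//]|//] uC hu; apply/negP => _.
    move: uC; rewrite Pv_S; apply/negP; apply: nP; have := ltn_ord s; move: hu => /=; lia.
  have wP : ~~ isP w.
    case: w wC hw {xw uw zw} => [[[i s]|//]|//] wC hw; apply/negP => _.
    move: wC; rewrite Pv_S; apply/negP; apply: nP; have := ltn_ord s; move: hw => /=; lia.
  case: u uC xu uw hu zu uP => [[[i1 s1]|[j1 s1]]|[]] uC xu uw hu zu uP //;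
  case: w wC xw uw hw zw wP => [[[i2 s2]|[j2 s2]]|[]] wC xw uw hw zw wP //;
  rewrite /= in hu hw; move: ht xu xw uw hu hw zu zw; brute.
have [x xC] : exists x, x \in C.
  case: hC => kk [c [k4 _ eC _]]; have k0 : 0 < kk by lia.
  by exists (c (Ordinal k0)); rewrite eC; apply: imset_f.
have hx := hint x xC.
case: x xC hx => [[[i s]|[j s]]|[]] xC hx.
- move: xC; rewrite Pv_S; apply/negP; apply: nP; have := ltn_ord s; move: hx => /=; lia.
- move: xC; rewrite Qv_S; apply/negP; apply: nQ; have := ltn_ord s; move: hx => /=; lia.
- by rewrite xC in nA.
- by rewrite xC in nB.
Qed.


Lemma nbr_intP i t y : 0 < t < L1 -> re (Pv i t) y -> y = Pv i t.-1 \/ y = Pv i t.+1.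
Proof.
move=> ht; case: y => [[[j s]|[j s]]|[]]; rewrite ?Pv_S ?Qv_S.
- rewrite re_PP; try side; case: (i =P j) => [<-|_] //= h.
  have sL := ltn_ord s.
  have [h1|h1] : t.+1 = s \/ s.+1 = t by move: h; rewrite /consec; lia.
  + by right; congr Pv; lia.
  + by left; congr Pv; lia.
- rewrite re_PQ; try side; move=> h; exfalso; move: h; case: (R i j) => /=; lia.
- rewrite re_PA; try side; lia.
- rewrite re_PB; try side; lia.
Qed.

Lemma nbr_intQ j t y : 0 < t < L2 -> re (Qv j t) y -> y = Qv j t.-1 \/ y = Qv j t.+1.
Proof.
move=> ht; case: y => [[[i s]|[i s]]|[]]; rewrite ?Pv_S ?Qv_S.
- rewrite re_QP; try side; move=> h; exfalso; move: h; case: (R i j) => /=; lia.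
- rewrite re_QQ; try side; case: (j =P i) => [<-|_] //= h.
  + have sL := ltn_ord s.
    have [h1|h1] : t.+1 = s \/ s.+1 = t by move: h; rewrite /consec; lia.
    * by right; congr Qv; lia.
    * by left; congr Qv; lia.
  + exfalso; lia.
- rewrite re_QA; try side; lia.
- rewrite re_QB; try side; lia.
Qed.

Lemma nbr_bP i y : re (Pv i L1) y ->
  [\/ y = Pv i L1.-1, y = zB | exists j, ~~ R i j /\ y = Qv j L2].
Proof.
case: y => [[[j s]|[j s]]|[]]; rewrite ?Pv_S ?Qv_S.
- rewrite re_PP; try side; case: (i =P j) => [<-|_] //= h.
  by apply: Or31; congr Pv; move: h; rewrite /consec; have := ltn_ord s; lia.
- rewrite re_PQ; try side; move=> h; apply: Or33; exists j.
  have := ltn_ord s; move: h; case: (R i j) => /= h sL; first lia.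
  by split => //; congr Qv; lia.
- rewrite re_PA; try side; lia.
- by move=> _; apply: Or32.
Qed.

Lemma all_inP C i s : is_hole re C -> 0 < s < L1 -> Pv i s \in C ->
  forall t, t <= L1 -> Pv i t \in C.
Proof. move=> hC hs sC; apply: (gen_all_in (f := Pv i) hC _ hs sC) => t y; exact: nbr_intP. Qed.

Lemma all_inQ C j s : is_hole re C -> 0 < s < L2 -> Qv j s \in C ->
  forall t, t <= L2 -> Qv j t \in C.
Proof. move=> hC hs sC; apply: (gen_all_in (f := Qv j) hC _ hs sC) => t y; exact: nbr_intQ. Qed.

Definition cPP (i i' : 'I_n) (a : nat) : TE :=
  if a <= L1 then Pv i a else if a == L1.+1 then zB
  else if a <= L1.*2.+2 then Pv i' (L1.*2.+2 - a) else zA.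
Definition HPP i i' : {set TE} := [set cPP i i' a | a : 'I_(L1.*2 + 4)].

Definition cPQB (i : 'I_n) (j : 'I_m) (a : nat) : TE :=
  if a <= L1 then Pv i (L1 - a) else if a <= L1 + L2 + 1 then Qv j (a - L1.+1) else zB.
Definition HPQB i j : {set TE} := [set cPQB i j a | a : 'I_(L1 + L2 + 3)].

Definition cPQA (i : 'I_n) (j : 'I_m) (a : nat) : TE :=
  if a <= L1 then Pv i a else if a <= L1 + L2 + 1 then Qv j (L1 + L2 + 1 - a) else zA.
Definition HPQA i j : {set TE} := [set cPQA i j a | a : 'I_(L1 + L2 + 3)].

Ltac hbrute := rewrite ?re_PP ?re_QQ ?re_PQ ?re_QP ?re_AP ?re_PA ?re_BP ?re_PB
   ?re_AQ ?re_QA ?re_BQ ?re_QB ?re_zz; try side; rewrite ?eqxx /consec /=; try done; try lia.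

Lemma HPP_hole i i' : i != i' -> is_hole re (HPP i i').
Proof.
move=> ii; exists (L1.*2 + 4), (fun a => cPP i i' a); split => //; first lia.
- pose pos (x : TE) : nat := match x with
     | inl (inl (p, t)) => if p == i then val t else L1.*2.+2 - t
     | inl (inr _) => 0
     | inr b => if b then L1.*2.+3 else L1.+1 end.
  have posK : forall a : 'I_(L1.*2 + 4), pos (cPP i i' a) = a.
    move=> a; have aK := ltn_ord a; rewrite /cPP /Pv; ifs => /=; rewrite ?eqxx.
    + by rewrite inordK //; lia.
    + lia.
    + by rewrite eq_sym (negbTE ii) inordK; lia.
    + lia.
  by move=> a b /(congr1 pos); rewrite !posK => /val_inj.
- have iiF : (i == i') = false by rewrite (negbTE ii).
  have iiF' : (i' == i) = false by rewrite eq_sym (negbTE ii).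
  move=> a b; have aK := ltn_ord a; have bK := ltn_ord b.
  rewrite (modS aK) (modS bK) /cPP; ifs; hbrute; rewrite ?iiF ?iiF' /=; lia.
Qed.

Lemma HPQB_hole i j : R i j -> is_hole re (HPQB i j).
Proof.
move=> Rij; exists (L1 + L2 + 3), (fun a => cPQB i j a); split => //; first lia.
- pose pos (x : TE) : nat := match x with
     | inl (inl (p, t)) => L1 - t
     | inl (inr (_, t)) => t + L1.+1
     | inr b => L1 + L2 + 2 end.
  have posK : forall a : 'I_(L1 + L2 + 3), pos (cPQB i j a) = a.
    move=> a; have aK := ltn_ord a; rewrite /cPQB /Pv /Qv; ifs => /=.
    + by rewrite inordK //; lia.
    + by rewrite inordK //; lia.
    + lia.
  by move=> a b /(congr1 pos); rewrite !posK => /val_inj.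
- move=> a b; have aK := ltn_ord a; have bK := ltn_ord b.
  rewrite (modS aK) (modS bK) /cPQB; ifs; hbrute; rewrite ?Rij /=; lia.
Qed.

Lemma HPQA_hole i j : ~~ R i j -> is_hole re (HPQA i j).
Proof.
move=> Rij; exists (L1 + L2 + 3), (fun a => cPQA i j a); split => //; first lia.
- pose pos (x : TE) : nat := match x with
     | inl (inl (p, t)) => val t
     | inl (inr (_, t)) => L1 + L2 + 1 - t
     | inr b => L1 + L2 + 2 end.
  have posK : forall a : 'I_(L1 + L2 + 3), pos (cPQA i j a) = a.
    move=> a; have aK := ltn_ord a; rewrite /cPQA /Pv /Qv; ifs => /=.
    + by rewrite inordK //; lia.
    + by rewrite inordK //; lia.
    + lia.
  by move=> a b /(congr1 pos); rewrite !posK => /val_inj.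
- move=> a b; have aK := ltn_ord a; have bK := ltn_ord b.
  rewrite (modS aK) (modS bK) /cPQA; ifs; hbrute; rewrite ?(negbTE Rij) /=; lia.
Qed.

Lemma mPP1 i i' t : t <= L1 -> Pv i t \in HPP i i'.
Proof.
move=> tL; have tK : t < L1.*2 + 4 by lia.
by apply/imsetP; exists (Ordinal tK) => //; rewrite /cPP /= tL.
Qed.

Lemma mPP2 i i' t : t <= L1 -> Pv i' t \in HPP i i'.
Proof.
move=> tL; have tK : L1.*2.+2 - t < L1.*2 + 4 by lia.
apply/imsetP; exists (Ordinal tK) => //; rewrite /cPP /=.
have -> : (L1.*2.+2 - t <= L1) = false by lia.
have -> : (L1.*2.+2 - t == L1.+1) = false by lia.
have -> : (L1.*2.+2 - t <= L1.*2.+2) = true by lia.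
congr Pv; lia.
Qed.

Lemma mPPA i i' : zA \in HPP i i'.
Proof.
have tK : L1.*2.+3 < L1.*2 + 4 by lia.
apply/imsetP; exists (Ordinal tK) => //; rewrite /cPP /=.
have -> : (L1.*2.+3 <= L1) = false by lia.
have -> : (L1.*2.+3 == L1.+1) = false by lia.
by have -> : (L1.*2.+3 <= L1.*2.+2) = false by lia.
Qed.

Lemma mPPB i i' : zB \in HPP i i'.
Proof.
have tK : L1.+1 < L1.*2 + 4 by lia.
apply/imsetP; exists (Ordinal tK) => //; rewrite /cPP /=.
have -> : (L1.+1 <= L1) = false by lia.
by rewrite eqxx.
Qed.

Lemma mPQB1 i j t : t <= L1 -> Pv i t \in HPQB i j.
Proof.
move=> tL; have tK : L1 - t < L1 + L2 + 3 by lia.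
apply/imsetP; exists (Ordinal tK) => //; rewrite /cPQB /=.
have -> : (L1 - t <= L1) = true by lia.
congr Pv; lia.
Qed.

Lemma mPQB2 i j t : t <= L2 -> Qv j t \in HPQB i j.
Proof.
move=> tL; have tK : t + L1.+1 < L1 + L2 + 3 by lia.
apply/imsetP; exists (Ordinal tK) => //; rewrite /cPQB /=.
have -> : (t + L1.+1 <= L1) = false by lia.
have -> : (t + L1.+1 <= L1 + L2 + 1) = true by lia.
congr Qv; lia.
Qed.

Lemma mPQBz i j : zB \in HPQB i j.
Proof.
have tK : L1 + L2 + 2 < L1 + L2 + 3 by lia.
apply/imsetP; exists (Ordinal tK) => //; rewrite /cPQB /=.
have -> : (L1 + L2 + 2 <= L1) = false by lia.
by have -> : (L1 + L2 + 2 <= L1 + L2 + 1) = false by lia.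
Qed.

Lemma mPQA1 i j t : t <= L1 -> Pv i t \in HPQA i j.
Proof.
move=> tL; have tK : t < L1 + L2 + 3 by lia.
by apply/imsetP; exists (Ordinal tK) => //; rewrite /cPQA /= tL.
Qed.

Lemma mPQA2 i j t : t <= L2 -> Qv j t \in HPQA i j.
Proof.
move=> tL; have tK : L1 + L2 + 1 - t < L1 + L2 + 3 by lia.
apply/imsetP; exists (Ordinal tK) => //; rewrite /cPQA /=.
have -> : (L1 + L2 + 1 - t <= L1) = false by lia.
have -> : (L1 + L2 + 1 - t <= L1 + L2 + 1) = true by lia.
congr Qv; lia.
Qed.

Lemma mPQAz i j : zA \in HPQA i j.
Proof.
have tK : L1 + L2 + 2 < L1 + L2 + 3 by lia.
apply/imsetP; exists (Ordinal tK) => //; rewrite /cPQA /=.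
have -> : (L1 + L2 + 2 <= L1) = false by lia.
by have -> : (L1 + L2 + 2 <= L1 + L2 + 1) = false by lia.
Qed.

Definition o0 : 'I_n := Ordinal (ltnW n2).
Definition o1 : 'I_n := Ordinal n2.

Lemma other (i : 'I_n) : exists i', i != i'.
Proof.
case: (i =P o0) => [->|h]; last by exists o0; apply/eqP.
by exists o1; apply/eqP => /(congr1 val).
Qed.

Definition canon (K : {set TE}) := holes_equivalent re (HPP o0 o1) K.

Lemma uniqP3 i x : x \notin [:: Pv i 0; Pv i 1; Pv i 2] -> uniq [:: Pv i 0; Pv i 1; Pv i 2; x].
Proof.
move=> hx; rewrite (_ : [:: _; _; _; x] = rcons [:: Pv i 0; Pv i 1; Pv i 2] x) //.
rewrite rcons_uniq hx /= !inE !Pv_eq ?eqxx /=; lia.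
Qed.

Lemma canon_PP i i' : i != i' -> canon (HPP i i').
Proof.
have unA : forall a, uniq [:: Pv a 0; Pv a 1; Pv a 2; zA] by move=> a; apply: uniqP3.
have cl1 : forall a b c, a != b -> a != c -> holes_equivalent re (HPP a b) (HPP a c).
  move=> a b c ab ac; apply: close_equiv; [exact: HPP_hole|exact: HPP_hole|].
  apply: (close4 (unA a)); (apply: mPP1 || apply: mPPA); lia.
have cl2 : forall a b, a != b -> holes_equivalent re (HPP a b) (HPP b a).
  move=> a b ab; apply: close_equiv; [exact: HPP_hole|apply: HPP_hole; by rewrite eq_sym|].
  apply: (close4 (unA a)); (apply: mPP1 || apply: mPP2 || apply: mPPA); lia.
have o01 : o0 != o1 by apply/eqP => /(congr1 val).
move=> ii'; rewrite /canon; case: (i =P o0) => [E|/eqP io].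
- by rewrite E in ii' *; apply: cl1.
- apply: (equiv_trans (cl1 _ _ i o01 _)); first by rewrite eq_sym.
  apply: (equiv_trans (cl2 _ _ _)); first by rewrite eq_sym.
  apply: cl1 => //.
Qed.

Lemma canon_PQA i j : ~~ R i j -> canon (HPQA i j).
Proof.
move=> Rij; have [i' ii] := other i.
apply: (equiv_trans (canon_PP ii)); apply: close_equiv; [exact: HPP_hole|exact: HPQA_hole|].
apply: (close4 (uniqP3 (x := zA) _)) => //; (apply: mPP1 || apply: mPPA || apply: mPQA1 || apply: mPQAz); lia.
Qed.

Lemma canon_PQB i j : R i j -> canon (HPQB i j).
Proof.
move=> Rij; have [i' ii] := other i.
apply: (equiv_trans (canon_PP ii)); apply: close_equiv; [exact: HPP_hole|exact: HPQB_hole|].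
apply: (close4 (uniqP3 (x := zB) _)) => //; (apply: mPP1 || apply: mPPB || apply: mPQB1 || apply: mPQBz); lia.
Qed.

Lemma hole_nearE C : is_hole re C -> exists K, [/\ is_hole re K, holes_close C K & canon K].
Proof.
move=> hC; have [x [xC hx]] := exists_intE hC.
case: x xC hx => [[[i s]|[j s]]|//] xC hx /=.
- rewrite Pv_S in xC; rewrite /= in hx.
  have allC := all_inP hC hx xC.
  have bC := allC L1 (leqnn _).
  have b1C := allC L1.-1 ltac:(lia).
  have rb : re (Pv i L1) (Pv i L1.-1) by rewrite re_PP ?eqxx /consec /=; lia.
  have [y [yC yn ry _ _]] := hole_other re_sym hC bC b1C rb.
  case: (nbr_bP ry) => [E|E|[j [Rij E]]]; subst y.
  + by rewrite eqxx in yn.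
  + have [i' ii] := other i; exists (HPP i i'); split; [exact: HPP_hole| |exact: canon_PP].
    apply: (close4 (uniqP3 (x := zB) _)) => //; (apply: allC || apply: mPP1 || apply: mPPB); lia.
  + exists (HPQA i j); split; [exact: HPQA_hole| |exact: canon_PQA].
    apply: (close4 (uniqP3 (x := Qv j L2) _)) => //; (apply: allC || apply: mPQA1 || apply: mPQA2); lia.
- rewrite Qv_S in xC; rewrite /= in hx.
  have allC := all_inQ hC hx xC.
  have unq : uniq [:: Qv j 0; Qv j 1; Qv j 2; Qv j 3] by rewrite /= !inE !Qv_eq ?eqxx /=; lia.
  case: (boolP (R o0 j)) => Rj.
  + exists (HPQB o0 j); split; [exact: HPQB_hole| |exact: canon_PQB].
    apply: (close4 unq); (apply: allC || apply: mPQB2); lia.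
  + exists (HPQA o0 j); split; [exact: HPQA_hole| |exact: canon_PQA].
    apply: (close4 unq); (apply: allC || apply: mPQA2); lia.
Qed.

Theorem even_core C D : is_hole re C -> is_hole re D -> holes_equivalent re C D.
Proof.
move=> hC hD.
have [K1 [hK1 c1 e1]] := hole_nearE hC.
have [K2 [hK2 c2 e2]] := hole_nearE hD.
apply: equiv_trans (close_equiv hC hK1 c1) _.
apply: equiv_trans (equiv_sym e1) _.
apply: equiv_trans e2 _.
apply: equiv_sym; exact: close_equiv.
Qed.

End Even.



Lemma gconnE (k : nat) (B : rel 'I_k) : gconnected B <-> forall x y, connect B x y.
Proof.
have eA : [rel u v | [&& B u v, u \in setT & v \in setT]] =2 B.
  by move=> u v; rewrite /= !in_setT !andbT.
split.
- move/forall_inP => h x y; have /forall_inP := h x (in_setT x).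
  by move/(_ y (in_setT y)); rewrite (eq_connect eA).
- move=> h; apply/forall_inP => x _; apply/forall_inP => y _.
  by rewrite (eq_connect eA); apply: h.
Qed.

Lemma compl_sym (k : nat) (A : rel 'I_k) : symmetric A -> symmetric (compl_rel A).
Proof. by move=> As a b; rewrite /compl_rel eq_sym As. Qed.

Lemma compl_conn (k : nat) (A : rel 'I_k) : symmetric A -> ~~ gconnected A -> gconnected (compl_rel A).
Proof.
move=> As nc.
have [x [y nxy]] : exists x y, ~~ connect A x y.
  case: (boolP [exists x, [exists y, ~~ connect A x y]]) => [/existsP [x /existsP [y h]]|/existsPn h].
    by exists x, y.
  exfalso; move/negP: nc; apply; apply/gconnE => u v.
  by move: (h u) => /existsPn /(_ v); rewrite negbK.
apply/gconnE => u v.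
have key : forall a b, ~~ connect A a b -> connect (compl_rel A) a b.
  move=> a b nab; apply: connect1; rewrite /compl_rel; apply/andP; split.
  - by apply: contra nab => /eqP ->; rewrite connect0.
  - by apply: contra nab => h; apply: connect1.
have cs : connect_sym A := sym_connect_sym As.
case: (boolP (connect A u v)) => [cuv|]; last exact: key.
have [w [nuw nvw]] : exists w, ~~ connect A u w /\ ~~ connect A v w.
  case: (boolP (connect A u x)) => cux.
  - exists y; split.
    + apply: contra nxy => cuy; rewrite cs in cux; exact: connect_trans cux cuy.
    + apply: contra nxy => cvy; rewrite cs in cux.
      exact: connect_trans (connect_trans cux cuv) cvy.
  - exists x; split => //; apply: contra cux => cvx; exact: connect_trans cuv cvx.
apply: connect_trans (key _ _ nuw) _.
by rewrite (sym_connect_sym (compl_sym As)); apply: key.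
Qed.

Lemma compl_compl (k : nat) (A : rel 'I_k) : irreflexive A -> compl_rel (compl_rel A) = A.
Proof.
move=> Ai; apply: functional_extensionality => a; apply: functional_extensionality => b.
rewrite /compl_rel; case: (a =P b) => [->|_] /=; first by rewrite Ai.
by rewrite negbK.
Qed.

Definition flip (k L : nat) (x : option ('I_k * 'I_L.+1)) : option ('I_k * 'I_L.+1) :=
  if x is Some (i, s) then Some (i, rev_ord s) else None.

Lemma flipK (k L : nat) : involutive (@flip k L).
Proof. by case=> [[i s]|] //=; rewrite rev_ordK. Qed.

Lemma flip_rel (k L : nat) (A : rel 'I_k) : irreflexive A -> symmetric A ->
  forall x y, @odd_frame_rel k L A false (flip x) (flip y) = @odd_frame_rel k L (compl_rel A) true x y.
Proof.
move=> Ai As [[i s]|] [[j t]|] //=; rewrite /odd_frame_rel /= /compl_rel /consec ?orbF.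
- have := ltn_ord s; have := ltn_ord t; rewrite (eq_sym j i) (As j i).
  case: (i == j); case: (A i j) => /=; lia.
- have := ltn_ord s; lia.
- have := ltn_ord t; lia.
Qed.

Unset Implicit Arguments.
Theorem mainTheorem14 (l : nat) (V : finType) (e : rel V) :
  7 <= l -> apexed_frame l e ->
  forall C D : {set V}, is_hole e C -> is_hole e D -> holes_equivalent e C D.
Proof.
move=> l7; rewrite /apexed_frame; case: ifP => ol.
- case=> k [A [f [k3 [[Ai As] [thA [thB [cA [cB [bf ef]]]]]]]]].
  have L2 : 2 <= (l - 3)./2 by lia.
  case: (boolP (gconnected A)) => gA; rewrite ?gA /= in ef.
  + (* apex on the B side: flip *)
    apply: (transfer (f := f \o @flip k (l - 3)./2)).
    * apply: bij_comp => //; exact: inv_bij (@flipK _ _).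
    * by move=> x y; rewrite /= ef flip_rel.
    * apply: odd_core => //.
      - exact: compl_sym.
      - by rewrite compl_compl.
      - by rewrite compl_compl.
  + apply: (transfer bf ef); apply: odd_core => //.
    exact: compl_conn.
- case=> n [m [R [f [n2 [nm3 [_ [_ [_ [bf ef]]]]]]]]].
  apply: (transfer bf ef); apply: even_core => //; lia.
Qed.
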